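(* There exists an absolute constant $0<c\le\tfrac12$ such that for every $q\in(0,\tfrac12)$, every positive integer $m$ and every integer $n>1$, \[ \mathbb{P}(\tau'_m\ge n^2)\ge 1-e^{-cm/n}. \]
   Context: Fix $q\in(0,1/2)$. Let $Y_1,Y_2,\dots$ be i.i.d. with $\mathbb{P}(Y_i=1)=\mathbb{P}(Y_i=-1)=q$ and $\mathbb{P}(Y_i=0)=1-2q$, and $T_j=Y_1+\cdots+Y_j$ (the lazy simple random walk with parameter $q$). For a nonzero integer $m$, $\tau'_m$ is the smallest positive integer $t$ with $T_t=m$. *)

(* Defs.v *)
From Stdlib Require Import Reals ZArith List.
Import ListNotations.
Open Scope R_scope.

Fixpoint step_seqs (L : nat) : list (list Z) :=
  match L with
  | O => [nil]
  | S L' => flat_map (fun p => map (fun y => y :: p) [(-1)%Z; 0%Z; 1%Z]) (step_seqs L')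
  end.

Definition step_prob (q : R) (y : Z) : R :=
  if Z.eqb y 0 then 1 - 2 * q else q.

Definition seq_prob (q : R) (p : list Z) : R :=
  fold_right (fun y acc => step_prob q y * acc) 1 p.

Fixpoint avoids (s m : Z) (p : list Z) : bool :=
  match p with
  | nil => true
  | y :: p' => negb (Z.eqb (s + y) m) && avoids (s + y) m p'
  end.

(* P(tau'_m >= N) for the lazy simple random walk T_j = Y_1+...+Y_j (T_0 = 0):
   tau'_m >= N iff T_t <> m for all 1 <= t <= N-1 (including tau'_m = +oo),
   an event determined by Y_1,...,Y_{N-1}. *)
Definition prob_tau_ge (q : R) (m : Z) (N : nat) : R :=
  fold_right Rplus 0
    (map (fun p => if avoids 0 m p then seq_prob q p else 0) (step_seqs (N - 1))).

(* Main.v *)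
Require Import Defs.
From Stdlib Require Import Reals ZArith List Lra Lia.
Import ListNotations.
Open Scope R_scope.
Require Import Psatz.

Definition Fs (q : R) (s m : Z) (l : list (list Z)) : R :=
  fold_right Rplus 0 (map (fun p => if avoids s m p then seq_prob q p else 0) l).

Lemma Fs_step q s m l :
  Fs q s m (flat_map (fun p => map (fun y => y :: p) [(-1)%Z; 0%Z; 1%Z]) l) =
  step_prob q (-1) * (if Z.eqb (s + -1) m then 0 else Fs q (s + -1) m l)
  + step_prob q 0 * (if Z.eqb (s + 0) m then 0 else Fs q (s + 0) m l)
  + step_prob q 1 * (if Z.eqb (s + 1) m then 0 else Fs q (s + 1) m l).
Proof.
  induction l as [|p l IH].
  - unfold Fs; simpl. destruct (Z.eqb _ _), (Z.eqb _ _), (Z.eqb _ _); simpl; ring.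
  - unfold Fs in *. rewrite (ltac:(reflexivity) : forall (f : list Z -> list (list Z)) a b, flat_map f (a :: b) = f a ++ flat_map f b). rewrite map_app, fold_right_app, IH. simpl.
    destruct (Z.eqb (s + -1) m), (Z.eqb (s+0) m), (Z.eqb (s+1) m); simpl;
    destruct (avoids (s + -1) m p), (avoids (s+0) m p), (avoids (s+1) m p); simpl; ring.
Qed.

Lemma main_lemma (q : R) (g : nat -> nat -> R) (m : Z) :
  0 <= q -> q <= 1/2 ->
  (forall x, (1 <= x)%nat -> g 0%nat x <= 1) ->
  (forall N, g N 0%nat <= 0) ->
  (forall N x, g (S N) (S x) <= (1 - 2*q) * g N (S x) + q * (g N x + g N (S (S x)))) ->
  forall L s, (s < m)%Z -> g L (Z.to_nat (m - s)) <= Fs q s m (step_seqs L).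
Proof.
  intros q0 q1 H0 Hz Hs L. induction L as [|L IH]; intros s Hsm.
  - unfold Fs; simpl. rewrite Rplus_0_r. apply H0. lia.
  - change (step_seqs (S L)) with
      (flat_map (fun p => map (fun y => y :: p) [(-1)%Z; 0%Z; 1%Z]) (step_seqs L)).
    rewrite Fs_step. unfold step_prob; simpl.
    destruct (Z.to_nat (m - s)) as [|k] eqn:Ek; [lia|].
    assert (E1 : Z.to_nat (m - (s + -1)) = S (S k)) by lia.
    assert (E2 : Z.to_nat (m - (s + 0)) = S k) by lia.
    assert (E3 : (s + 1 = m)%Z \/ (s + 1 < m)%Z) by lia.
    assert (A1 := IH (s + -1)%Z ltac:(lia)). rewrite E1 in A1.
    assert (A2 := IH (s + 0)%Z ltac:(lia)). rewrite E2 in A2.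
    replace (Z.eqb (s + -1) m) with false by (symmetry; apply Z.eqb_neq; lia).
    replace (Z.eqb (s + 0) m) with false by (symmetry; apply Z.eqb_neq; lia).
    eapply Rle_trans; [apply Hs|].
    destruct E3 as [E3|E3].
    + replace (Z.eqb (s + 1) m) with true by (symmetry; apply Z.eqb_eq; lia).
      assert (k = 0%nat) by lia. subst k.
      pose proof (Hz L).
      assert (0 <= 1 - 2*q) by lra.
      assert ((1-2*q) * g L 1%nat <= (1 - 2 * q) * Fs q (s + 0) m (step_seqs L))
        by (apply Rmult_le_compat_l; lra).
      assert (q * g L (S (S 0)) <= q * Fs q (s + -1) m (step_seqs L))
        by (apply Rmult_le_compat_l; lra).
      assert (q * g L 0%nat <= 0) by (rewrite <- (Rmult_0_r q); apply Rmult_le_compat_l; lra).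
      lra.
    + replace (Z.eqb (s + 1) m) with false by (symmetry; apply Z.eqb_neq; lia).
      assert (A3 := IH (s + 1)%Z E3).
      replace (Z.to_nat (m - (s + 1))) with k in A3 by lia.
      assert (0 <= 1 - 2*q) by lra.
      assert ((1-2*q) * g L (S k) <= (1 - 2 * q) * Fs q (s + 0) m (step_seqs L))
        by (apply Rmult_le_compat_l; lra).
      assert (q * g L (S (S k)) <= q * Fs q (s + -1) m (step_seqs L))
        by (apply Rmult_le_compat_l; lra).
      assert (q * g L k <= q * Fs q (s+1) m (step_seqs L))
        by (apply Rmult_le_compat_l; lra).
      lra.
Qed.
Lemma my_le_div a b c : 0 < b -> a <= c * b -> a / b <= c.
Proof.
  intros Hb H. unfold Rdiv. apply (Rmult_le_reg_r b); auto.
  rewrite Rmult_assoc, Rinv_l by lra. lra.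
Qed.

Lemma my_div_nonneg a b : 0 <= a -> 0 < b -> 0 <= a / b.
Proof.
  intros Ha Hb. unfold Rdiv. apply Rmult_le_pos; auto. apply Rlt_le, Rinv_0_lt_compat; auto.
Qed.

Lemma exp_pow' x k : exp x ^ k = exp (INR k * x).
Proof.
  induction k as [|k IH]; simpl. { rewrite Rmult_0_l, exp_0; ring. }
  rewrite IH, <- exp_plus. f_equal. destruct k; simpl; ring.
Qed.

Lemma cubic_poly (n X : R) : 0 < n -> 0 <= X -> 0 <= 6*n^3 - 6*n^2*X + X^3.
Proof.
  intros Hn HX.
  destruct (Rle_lt_dec X n) as [H1|H1].
  - assert (0 <= n^2*(n - X)) by (apply Rmult_le_pos; nra). nra.
  - destruct (Rle_lt_dec X (3*n)) as [H2|H2].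
    + assert (0 <= (X - 14/10*n)^2 * (X + 28/10*n)) by (apply Rmult_le_pos; [apply pow2_ge_0| lra]).
      assert (0 <= n^2 * (3*n - X)) by (apply Rmult_le_pos; [apply pow2_ge_0| lra]).
      assert (0 < n^3) by (apply pow_lt; lra). nra.
    + assert (0 <= X * (X*X - 9*n^2)) by (apply Rmult_le_pos; nra). nra.
Qed.

Definition gcub (nr : R) (N x : nat) : R :=
  (1/nr - 3 * (1/(6*nr^3)) * INR N) * INR x - (1/(6*nr^3)) * INR x ^ 3.

Lemma gcub_ok (q nr : R) (m : Z) : 0 <= q -> q <= 1/2 -> 0 < nr ->
  forall L s, (s < m)%Z -> gcub nr L (Z.to_nat (m - s)) <= Fs q s m (step_seqs L).
Proof.
  intros q0 q1 Hn. apply main_lemma; auto.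
  - intros x _. unfold gcub. simpl INR at 1.
    pose proof (cubic_poly nr (INR x) Hn (pos_INR x)).
    assert (E : (1 / nr - 3 * (1 / (6 * nr ^ 3)) * 0) * INR x - 1 / (6 * nr ^ 3) * INR x ^ 3
       = (6 * nr^2 * INR x - INR x ^3) / (6 * nr^3)) by (field; lra).
    rewrite E. apply my_le_div. { apply Rmult_lt_0_compat; [lra| apply pow_lt; lra]. }
    lra.
  - intros N. unfold gcub. simpl INR. lra.
  - intros N x. unfold gcub. rewrite !S_INR.
    set (X := INR x). set (b := 1/(6*nr^3)).
    assert (0 <= b) by (unfold b; apply Rlt_le, Rdiv_lt_0_compat; [lra| apply Rmult_lt_0_compat; [lra|apply pow_lt; lra]]).
    assert (0 <= X) by apply pos_INR.
    assert (E : (1 - 2 * q) * ((1 / nr - 3 * b * INR N) * (X + 1) - b * (X + 1) ^ 3) +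
      q * ((1 / nr - 3 * b * INR N) * X - b * X ^ 3 +
        ((1 / nr - 3 * b * INR N) * (X + 1 + 1) - b * (X + 1 + 1) ^ 3))
      - ((1 / nr - 3 * b * (INR N + 1)) * (X + 1) - b * (X + 1) ^ 3)
      = 3 * b * (X+1) * (1 - 2*q)) by ring.
    assert (0 <= 3 * b * (X+1) * (1 - 2*q)).
    { apply Rmult_le_pos; [|lra]. apply Rmult_le_pos; lra. }
    lra.
Qed.

Definition gexp (nr : R) (N x : nat) : R :=
  1 - (1 + 1/nr^2)^N * (1 - 1/nr)^x.

Lemma gexp_ok (q nr : R) (m : Z) : 0 <= q -> q < 1/2 -> 2 <= nr ->
  forall L s, (s < m)%Z -> gexp nr L (Z.to_nat (m - s)) <= Fs q s m (step_seqs L).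
Proof.
  intros q0 q1 Hn.
  assert (Ha : 0 < 1/nr <= 1/2).
  { split. apply Rdiv_lt_0_compat; lra. apply my_le_div; lra. }
  set (a := 1/nr) in *.
  assert (Ea : 1/nr^2 = a^2) by (unfold a; field; lra).
  apply main_lemma; auto; try lra.
  - intros x _. unfold gexp.
    assert (0 <= (1 + 1/nr^2)^0 * (1 - 1/nr)^x) by (simpl; rewrite Rmult_1_l; apply pow_le; fold a; lra).
    lra.
  - intros N. unfold gexp. rewrite pow_O, Rmult_1_r. rewrite Ea.
    pose proof (pow_R1_Rle (1 + a^2) N ltac:(nra)). lra.
  - intros N x. unfold gexp. fold a. rewrite Ea.
    change ((1 + a^2)^(S N)) with ((1 + a^2) * (1 + a^2)^N).
    change ((1 - a)^(S x)) with ((1 - a) * (1 - a)^x).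
    change ((1 - a)^(S (S x))) with ((1 - a) * ((1 - a) * (1 - a)^x)).
    set (P := (1 + a^2)^N * (1 - a)^x).
    assert (0 <= P) by (unfold P; apply Rmult_le_pos; apply pow_le; nra).
    assert (E : (1 - 2 * q) * (1 - (1 + a ^ 2) ^ N * ((1 - a) * (1 - a) ^ x)) +
       q * (1 - (1 + a ^ 2) ^ N * (1 - a) ^ x +
         (1 - (1 + a ^ 2) ^ N * ((1 - a) * ((1 - a) * (1 - a) ^ x))))
       - (1 - (1 + a ^ 2) * (1 + a ^ 2) ^ N * ((1 - a) * (1 - a) ^ x))
       = P * (a^2 * (1 - a - q))) by (unfold P; ring).
    assert (0 <= P * (a^2 * (1 - a - q))) by (apply Rmult_le_pos; [lra| apply Rmult_le_pos; nra]).
    unfold P in *. lra.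
Qed.

Theorem corollary2p3 :
  exists c : R, 0 < c /\ c <= 1 / 2 /\
    forall (q : R), 0 < q -> q < 1 / 2 ->
    forall (m n : nat), (0 < m)%nat -> (1 < n)%nat ->
      1 - exp (- (c * INR m / INR n)) <= prob_tau_ge q (Z.of_nat m) (n * n).
Proof.
  exists (1/10). split; [lra|]. split; [lra|].
  intros q q0 q1 m n Hm Hn.
  assert (Hnr : 2 <= INR n) by (replace 2 with (INR 2) by (simpl; ring); apply le_INR; lia).
  assert (HL : INR (n * n - 1) <= INR n * INR n) by (rewrite <- mult_INR; apply le_INR; lia).
  assert (HL0 : 0 <= INR (n * n - 1)) by apply pos_INR.
  assert (HM : 1 <= INR m) by (replace 1 with (INR 1) by reflexivity; apply le_INR; lia).
  set (L := (n * n - 1)%nat) in *. set (nr := INR n) in *. set (M := INR m) in *.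
  change (prob_tau_ge q (Z.of_nat m) (n * n)) with (Fs q 0 (Z.of_nat m) (step_seqs L)).
  assert (Em : Z.to_nat (Z.of_nat m - 0) = m) by lia.
  destruct (le_lt_dec (10 * n) (9 * m)) as [Hc|Hc].
  - pose proof (gexp_ok q nr (Z.of_nat m) ltac:(lra) q1 Hnr L 0 ltac:(lia)) as G.
    rewrite Em in G. unfold gexp in G. eapply Rle_trans; [|exact G].
    assert (Hc' : 10 * nr <= 9 * M).
    { unfold nr, M. replace 10 with (INR 10) by (simpl; ring). replace 9 with (INR 9) by (simpl; ring).
      rewrite <- !mult_INR. apply le_INR. lia. }
    assert (B1 : (1 + 1/nr^2)^L <= exp (INR L * (1/nr^2))).
    { rewrite <- exp_pow'. apply pow_incr. split.
      - assert (0 <= 1/nr^2) by (apply Rlt_le, Rdiv_lt_0_compat; [lra|apply pow_lt; lra]). lra.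
      - pose proof (exp_ineq1_le (1/nr^2)). lra. }
    assert (B2 : (1 - 1/nr)^m <= exp (M * (- (1/nr)))).
    { unfold M. rewrite <- exp_pow'. apply pow_incr. split.
      - assert (1/nr <= 1/2) by (apply my_le_div; lra). lra.
      - pose proof (exp_ineq1_le (- (1/nr))). lra. }
    assert (B3 : INR L * (1/nr^2) + M * (- (1/nr)) <= - (1/10 * M / nr)).
    { assert (INR L * (1/nr^2) <= 1).
      { replace (INR L * (1/nr^2)) with (INR L / (nr*nr)) by (field; lra).
        apply my_le_div; nra. }
      assert (M * (- (1/nr)) + 1/10 * M / nr = - (9 * M) / (10 * nr)) by (field; lra).
      assert (- (9 * M) / (10 * nr) <= -1).
      { apply my_le_div; nra. }
      lra. }
    assert (0 <= (1 - 1/nr)^m) by (apply pow_le; assert (1/nr <= 1/2) by (apply my_le_div; lra); lra).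
    assert (0 <= exp (INR L * (1/nr^2))) by (apply Rlt_le, exp_pos).
    assert (H2 : (1 + 1/nr^2)^L * (1 - 1/nr)^m <= exp (INR L * (1/nr^2)) * exp (M * (- (1/nr)))).
    { apply Rmult_le_compat; try assumption. apply pow_le.
      assert (0 <= 1/nr^2) by (apply Rlt_le, Rdiv_lt_0_compat; [lra|apply pow_lt; lra]). lra. }
    rewrite <- exp_plus in H2.
    assert (exp (INR L * (1 / nr ^ 2) + M * - (1 / nr)) <= exp (- (1/10 * M / nr))).
    { destruct B3 as [B3|B3]; [apply Rlt_le, exp_increasing; exact B3| rewrite B3; lra]. }
    lra.
  - pose proof (gcub_ok q nr (Z.of_nat m) ltac:(lra) ltac:(lra) ltac:(lra) L 0 ltac:(lia)) as G.
    rewrite Em in G. unfold gcub in G. fold M in G. eapply Rle_trans; [|exact G].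
    assert (Hc' : 9 * M < 10 * nr).
    { unfold nr, M. replace 10 with (INR 10) by (simpl; ring). replace 9 with (INR 9) by (simpl; ring).
      rewrite <- !mult_INR. apply lt_INR. lia. }
    pose proof (exp_ineq1_le (- (1/10 * M / nr))).
    assert (1/10 * M / nr <= (1 / nr - 3 * (1 / (6 * nr ^ 3)) * INR L) * M - 1 / (6 * nr ^ 3) * M ^ 3).
    { assert (E1 : (1 / nr - 3 * (1 / (6 * nr ^ 3)) * INR L) * M - 1 / (6 * nr ^ 3) * M ^ 3
        - 1/10 * M / nr = M * ((nr*nr - INR L) / (2 * nr^3) + (12 * nr^2 - 5 * M^2) / (30 * nr^3))) by (field; lra).
      assert (0 <= (nr*nr - INR L) / (2 * nr^3)).
      { apply my_div_nonneg; [lra| apply Rmult_lt_0_compat; [lra|apply pow_lt; lra]]. }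
      assert (0 <= (12 * nr^2 - 5 * M^2) / (30 * nr^3)).
      { apply my_div_nonneg; [nra| apply Rmult_lt_0_compat; [lra|apply pow_lt; lra]]. }
      assert (0 <= M * ((nr*nr - INR L) / (2 * nr^3) + (12 * nr^2 - 5 * M^2) / (30 * nr^3))) by (apply Rmult_le_pos; lra).
      lra. }
    lra.
Qed.
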